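(* Let $X$ be a GOGAm triangle of size $n$. (i) For $1\leq k\leq n$, the triangle obtained from $X$ by replacing every entry $X_{i,j}$ with $n\geq i\geq j+k$ by $1$ is a GOGAm triangle. (ii) Let $n\geq m\geq k\geq 1$. Suppose that for every $i\geq m+1$ the partial SW–NE diagonal $(X_{i+l,k+l})_{0\leq l\leq n-i}$ is constant. Then the triangle obtained from $X$ by replacing the entries $X_{m+l,k+l}$, $1\leq l\leq n-m$, by $X_{m,k}$ is a GOGAm triangle.
   Context: A Gelfand–Tsetlin triangle of size $n$ is an array $X=(X_{i,j})_{n\geq i\geq j\geq 1}$ of positive integers (row $n$ is the top row, row $1$ the bottom) with $X_{i+1,j}\leq X_{i,j}\leq X_{i+1,j+1}$ for all $n-1\geq i\geq j\geq 1$. A Magog triangle of size $n$ is a Gelfand–Tsetlin triangle with $X_{j,j}\leq j$ for all $j$. For $1\leq k\leq n-1$, $s_k$ changes only row $k$, replacing $X_{k,j}$ by $\max(X_{k+1,j},X_{k-1,j-1})+\min(X_{k+1,j+1},X_{k-1,j})-X_{k,j}$ (terms outside the triangle omitted); $\omega_j=s_j\circ\cdots\circ s_1$, $S=\omega_1\circ\cdots\circ\omega_{n-1}$. A GOGAm triangle of size $n$ is a Gelfand–Tsetlin triangle $X$ with $S(X)$ a Magog triangle. (Equivalently, by a known result, $X_{n,n}\leq n$ and for all $1\leq k\leq n-1$ and all $n=j_0>\dots>j_{n-k}\geq 1$: $\sum_{i=0}^{n-k-1}(X_{j_i+i,j_i}-X_{j_{i+1}+i,j_{i+1}})+X_{j_{n-k}+n-k,j_{n-k}}\leq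 k$.) *)

(* Defs.v *)
From mathcomp Require Import all_boot.
Set Implicit Arguments. Unset Strict Implicit. Unset Printing Implicit Defensive.

(* A triangle is a function X : nat -> nat -> nat; X i j is the entry X_{i,j}.
   Only entries with n >= i >= j >= 1 are relevant; all predicates below only
   inspect those entries. *)
Definition triangle := nat -> nat -> nat.

Definition GT (n : nat) (X : triangle) : Prop :=
  (forall i j, 1 <= j -> j <= i -> i <= n -> 1 <= X i j) /\
  (forall i j, 1 <= j -> j <= i -> i <= n - 1 ->
     X i.+1 j <= X i j /\ X i j <= X i.+1 j.+1).

Definition Magog (n : nat) (X : triangle) : Prop :=
  GT n X /\ (forall j, 1 <= j -> j <= n -> X j j <= j).

(* The involution s_k (for 1 <= k <= n-1): only row k changes;
   X_{k,j} := max(X_{k+1,j}, X_{k-1,j-1}) + min(X_{k+1,j+1}, X_{k-1,j}) - X_{k,j},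
   where terms outside the triangle are omitted: X_{k-1,j-1} exists iff j >= 2,
   X_{k-1,j} exists iff j <= k-1 (omitting in a max of positive entries = max with 0). *)
Definition s_op (k : nat) (X : triangle) : triangle :=
  fun i j =>
    if (i == k) && (1 <= j <= k) then
      let mx := if 2 <= j then maxn (X k.+1 j) (X k.-1 j.-1) else X k.+1 j in
      let mn := if j <= k.-1 then minn (X k.+1 j.+1) (X k.-1 j) else X k.+1 j.+1 in
      mx + mn - X k j
    else X i j.

Fixpoint omega (j : nat) (X : triangle) : triangle :=
  match j with
  | 0 => X
  | j'.+1 => s_op j'.+1 (omega j' X)
  end.

Fixpoint S_aux (m : nat) (X : triangle) : triangle :=
  match m with
  | 0 => X
  | m'.+1 => S_aux m' (omega m'.+1 X)
  end.

Definition S_op (n : nat) (X : triangle) : triangle := S_aux n.-1 X.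

Definition GOGAm (n : nat) (X : triangle) : Prop := GT n X /\ Magog n (S_op n X).

(* Main.v *)
Require Import Defs.
From mathcomp Require Import all_boot.
From Stdlib Require Import ZArith Lia.
From mathcomp Require Import all_boot zify.
Set Implicit Arguments. Unset Strict Implicit. Unset Printing Implicit Defensive.

Lemma s_op_row k X i j : i != k -> s_op k X i j = X i j.
Proof. by move=> h; rewrite /s_op (negbTE h). Qed.

Lemma s_op_rowk k X j : 1 <= j <= k -> s_op k X k j =
  (if 2 <= j then maxn (X k.+1 j) (X k.-1 j.-1) else X k.+1 j) +
  (if j <= k.-1 then minn (X k.+1 j.+1) (X k.-1 j) else X k.+1 j.+1) - X k j.
Proof. by move=> h; rewrite /s_op eqxx h. Qed.

Lemma GT_pos n X i j : GT n X -> 1 <= j -> j <= i -> i <= n -> 1 <= X i j.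
Proof. by case=> h _; apply: h. Qed.
Lemma GT_il n X i j : GT n X -> 1 <= j -> j <= i -> i <= n - 1 -> X i.+1 j <= X i j.
Proof. by case=> _ h hj hi hn; case: (h i j hj hi hn). Qed.
Lemma GT_ir n X i j : GT n X -> 1 <= j -> j <= i -> i <= n - 1 -> X i j <= X i.+1 j.+1.
Proof. by case=> _ h hj hi hn; case: (h i j hj hi hn). Qed.

Lemma s_op_bounds n k X j : GT n X -> 1 <= k -> k <= n - 1 -> 1 <= j -> j <= k ->
  [/\ X k.+1 j <= s_op k X k j, s_op k X k j <= X k.+1 j.+1,
      (2 <= j -> X k.-1 j.-1 <= s_op k X k j) &
      (j <= k.-1 -> s_op k X k j <= X k.-1 j)].
Proof.
move=> G hk hkn hj hjk; rewrite s_op_rowk; last by rewrite hj hjk.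
have a1 := GT_il G hj hjk hkn.
have a2 := GT_ir G hj hjk hkn.
have a3 : 2 <= j -> X k.-1 j.-1 <= X k j.
  move=> h2; have H := GT_ir G (i:=k.-1) (j:=j.-1).
  have ek : k.-1.+1 = k by lia. have ej : j.-1.+1 = j by lia.
  rewrite ek ej in H; apply: H; lia.
have a4 : j <= k.-1 -> X k j <= X k.-1 j.
  move=> h2; have H := GT_il G (i:=k.-1) (j:=j).
  have ek : k.-1.+1 = k by lia.
  rewrite ek in H; apply: H; lia.
case: ifP => h2; case: ifP => h3.
- move: (a3 h2) (a4 h3) => b3 b4; split; lia.
- move: (a3 h2) => b3; split; lia.
- move: (a4 h3) => b4; split; lia.
- split; lia.
Qed.

Lemma s_op_GT n k X : 1 <= k -> k <= n - 1 -> GT n X -> GT n (s_op k X).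
Proof.
move=> hk hkn G; split.
- move=> i j hj hji hin; case: (eqVneq i k) => [eik|hik].
  + subst i; have [b1 _ _ _] := s_op_bounds G hk hkn hj hji.
    have := GT_pos G (i:=k.+1) (j:=j); lia.
  + rewrite s_op_row //; exact: GT_pos G hj hji hin.
- move=> i j hj hji hin.
  case: (eqVneq i k) => [eik|hik].
  + subst i. have [b1 b2 _ _] := s_op_bounds G hk hkn hj hji.
    rewrite (s_op_row _ _ (i:=k.+1)); last by rewrite gtn_eqF.
    rewrite (s_op_row _ _ (i:=k.+1)); last by rewrite gtn_eqF.
    by split.
  + rewrite (s_op_row _ _ hik).
    case: (eqVneq i.+1 k) => [eik|hik1].
    * have ek : i = k.-1 by lia.
      have [_ _ _ b4] := s_op_bounds G hk hkn hj (j:=j) ltac:(lia).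
      have [_ _ b3 _] := s_op_bounds G hk hkn (j:=j.+1) ltac:(lia) ltac:(lia).
      rewrite eik; split.
      -- rewrite ek in b4 *; apply: b4; lia.
      -- rewrite ek; have := b3 ltac:(lia); by rewrite /=.
    * rewrite !(s_op_row _ _ hik1); by split; [exact: GT_il G hj hji hin|exact: GT_ir G hj hji hin].
Qed.

Lemma omega_GT n m X : m <= n - 1 -> GT n X -> GT n (omega m X).
Proof.
elim: m => [|m IH] //= hm G; apply: s_op_GT => //; try lia; apply: IH => //; lia.
Qed.

Lemma S_aux_GT n m X : m <= n - 1 -> GT n X -> GT n (S_aux m X).
Proof.
elim: m X => [|m IH] X //= hm G; apply: IH; first lia. exact: (@omega_GT n m.+1 X).
Qed.

Lemma omega_row m X i j : m < i -> omega m X i j = X i j.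
Proof.
elim: m => [|m IH] //= hm; rewrite s_op_row; first (apply: IH; lia). apply/eqP; lia.
Qed.

Lemma S_aux_S m X : S_aux m.+1 X = S_aux m (omega m.+1 X).
Proof. by []. Qed.

Lemma S_aux_row m X i j : m < i -> S_aux m X i j = X i j.
Proof.
elim: m X => [|m IH] X hm //; rewrite S_aux_S IH; first (apply: omega_row; lia). lia.
Qed.

(* later toggles don't touch row k *)
Lemma omega_stable m k X j : k <= m -> omega m X k j = omega k X k j.
Proof.
elim: m => [|m IH] hk.
- by have -> : k = 0 by lia.
- case: (eqVneq k m.+1) => [->//|hne].
  rewrite /= s_op_row //; apply: IH; lia.
Qed.

Lemma GT_restr n X : GT n X -> GT n.-1 X.
Proof.
case=> h1 h2; split.
- move=> i j a b c; apply: h1; lia.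
- move=> i j a b c; apply: h2; lia.
Qed.

Lemma omega_pred m X : (1 <= m)%N -> omega m X = s_op m (omega m.-1 X).
Proof. by case: m. Qed.

Open Scope Z_scope.
Definition xz (X : triangle) (d c : nat) : Z := Z.of_nat (X (c + d)%N c).

Section Toggle.
Variables (n : nat) (X : triangle).
Hypothesis G : GT n X.
Let Zt := omega n.-1 X.

Definition uc (e i : nat) : Z := if e is e'.+1 then xz Zt e' i else xz X 0 i.+1.
Definition dl (e i : nat) : Z := Z.min (xz X e i.+1) (uc e i) - xz X e i.

Lemma toggle_kj k j : (1 <= j)%N -> (j <= k)%N -> (k <= n.-1)%N ->
  Z.of_nat (Zt k j) =
  (if (2 <= j)%N then Z.max (Z.of_nat (X k.+1 j)) (Z.of_nat (Zt k.-1 j.-1)) else Z.of_nat (X k.+1 j))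
  + (if (j <= k.-1)%N then Z.min (Z.of_nat (X k.+1 j.+1)) (Z.of_nat (Zt k.-1 j)) else Z.of_nat (X k.+1 j.+1))
  - Z.of_nat (X k j).
Proof.
move=> hj hjk hkn.
have hk : (1 <= k)%N by lia.
have E1 : Zt k j = omega k X k j by rewrite /Zt omega_stable.
have E2 : omega k X k j = s_op k (omega k.-1 X) k j by rewrite omega_pred.
rewrite E1 E2 s_op_rowk; last by rewrite hj hjk.
set W := omega k.-1 X.
have GW : GT n W by apply: omega_GT => //; lia.
have W1 : forall j, W k.+1 j = X k.+1 j by move=> j'; apply: omega_row; lia.
have W2 : forall j, W k j = X k j by move=> j'; apply: omega_row; lia.
have W3 : forall j, W k.-1 j = Zt k.-1 j by move=> j'; rewrite /W /Zt omega_stable //; lia.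
have b1 := GT_ir GW (i:=k) (j:=j) hj hjk ltac:(lia).
have b2 : (j <= k.-1)%N -> (W k j <= W k.-1 j)%N.
  move=> h; have H := GT_il GW (i:=k.-1) (j:=j) hj h ltac:(lia).
  by rewrite prednK in H.
rewrite !W1 !W2 !W3 in b1 b2 *.
case: ifP => h2; case: ifP => h3.
- have := b2 h3; lia.
- lia.
- have := b2 h3; lia.
- lia.
Qed.

Lemma toggle_z e c : (1 <= c)%N -> (c + e <= n.-1)%N ->
  xz Zt e c = (if c == 1%N then xz X e.+1 1 else Z.max (xz X e.+1 c) (xz Zt e c.-1)) + dl e c.
Proof.
move=> hc hce.
rewrite /xz toggle_kj; try lia.
rewrite /dl /uc /xz.
case: c hc hce => [|[|c]] hc hce //.
- case: e hce => [|e] hce /=; rewrite ?addnS ?addSn ?addn0 ?add0n /=; lia.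
- have -> : (2 <= c.+2)%N by [].
  case: e hce => [|e] hce /=; rewrite ?addnS ?addSn ?addn0 ?add0n /=.
  + have -> : (c.+2 <= c.+1)%N = false by lia. lia.
  + have -> : (c.+2 <= (c+e).+2)%N by lia. lia.
Qed.
End Toggle.
Set Implicit Arguments. Unset Strict Implicit. Unset Printing Implicit Defensive.
Open Scope Z_scope.

Fixpoint rmx (f : nat -> Z) (a len : nat) : Z :=
  match len with O => f a | l.+1 => Z.max (rmx f a l) (f (a + l.+1)%N) end.
Definition rmax f a b := rmx f a (b - a).

Lemma rmax_single f a : rmax f a a = f a.
Proof. by rewrite /rmax subnn. Qed.

Lemma rmax_last f a b : (a <= b)%N -> rmax f a b.+1 = Z.max (rmax f a b) (f b.+1).
Proof.
move=> h; rewrite /rmax.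
have -> : (b.+1 - a = (b - a).+1)%N by lia.
by rewrite /= ; have -> : (a + (b - a).+1 = b.+1)%N by lia.
Qed.

Lemma rmax_ind (P : nat -> Prop) a : P a -> (forall b, (a <= b)%N -> P b -> P b.+1) ->
  forall b, (a <= b)%N -> P b.
Proof.
move=> Pa Ps b hb; have -> : b = (a + (b - a))%N by lia.
elim: (b - a)%N => [|k IH]; first by rewrite addn0.
rewrite addnS; apply: Ps => //; lia.
Qed.

Lemma rmax_ext f g a b : (forall i, (a <= i)%N -> (i <= b)%N -> f i = g i) ->
  (a <= b)%N -> rmax f a b = rmax g a b.
Proof.
move=> H hab; move: H.
pose P b := (forall i, (a <= i)%N -> (i <= b)%N -> f i = g i) -> rmax f a b = rmax g a b.
apply: (@rmax_ind P a) hab.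
- by move=> H; rewrite !rmax_single; apply: H.
- move=> b' hb IH H; rewrite !rmax_last // IH; last by move=> i h1 h2; apply: H; lia.
  by rewrite H //; lia.
Qed.

Lemma rmax_ge f a b i : (a <= i)%N -> (i <= b)%N -> f i <= rmax f a b.
Proof.
move=> h1 h2.
have H : forall b, (a <= b)%N -> (i <= b)%N -> f i <= rmax f a b.
  apply: (@rmax_ind (fun b => (i <= b)%N -> f i <= rmax f a b) a).
  - move=> h; have ei : i = a by lia.
    rewrite ei rmax_single; lia.
  - move=> b' hb IH h; rewrite rmax_last //.
    case: (leqP i b') => h'; first by have := IH h'; lia.
    have ei : i = b'.+1 by lia.
    rewrite ei; lia.
by apply: H => //; lia.
Qed.

Lemma rmax_addc f a b k : (a <= b)%N -> rmax (fun i => f i + k) a b = rmax f a b + k.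
Proof.
move=> h; pose P b := rmax (fun i => f i + k) a b = rmax f a b + k.
apply: (@rmax_ind P a) h; first by rewrite /P !rmax_single.
by move=> b' hb IH; rewrite /P !rmax_last // IH; lia.
Qed.

Lemma rmax_maxf f g a b : (a <= b)%N ->
  rmax (fun i => Z.max (f i) (g i)) a b = Z.max (rmax f a b) (rmax g a b).
Proof.
move=> h; pose P b := rmax (fun i => Z.max (f i) (g i)) a b = Z.max (rmax f a b) (rmax g a b).
apply: (@rmax_ind P a) h; first by rewrite /P !rmax_single.
by move=> b' hb IH; rewrite /P !rmax_last // IH; lia.
Qed.

Lemma rmax_exch (U V : nat -> Z) a c : (a <= c)%N ->
  rmax (fun j => rmax U a j.-1 + V j) a.+1 c.+1 =
  rmax (fun j' => U j' + rmax V j'.+1 c.+1) a c.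
Proof.
move=> h.
pose P c := rmax (fun j => rmax U a j.-1 + V j) a.+1 c.+1 =
  rmax (fun j' => U j' + rmax V j'.+1 c.+1) a c.
apply: (@rmax_ind P a) h.
- by rewrite /P /= !rmax_single.
- move=> c0 hc IH; rewrite /P rmax_last; last by lia.
  rewrite IH /= (rmax_last (fun j' => U j' + rmax V j'.+1 c0.+2)) // rmax_single.
  have E : rmax (fun j' => U j' + rmax V j'.+1 c0.+2) a c0 =
           rmax (fun j' => Z.max (U j' + rmax V j'.+1 c0.+1) (U j' + V c0.+2)) a c0.
    apply: rmax_ext => //.
    move=> i h1 h2; rewrite rmax_last; last by lia. lia.
  rewrite E rmax_maxf // (rmax_addc U) // (rmax_last U) //.
  lia.
Qed.

Fixpoint smx (f : nat -> Z) (a len : nat) : Z :=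
  match len with O => f a | l.+1 => smx f a l + f (a + l.+1)%N end.
Definition ssum f a b := smx f a (b - a).

Lemma ssum_single f a : ssum f a a = f a.
Proof. by rewrite /ssum subnn. Qed.
Lemma ssum_last f a b : (a <= b)%N -> ssum f a b.+1 = ssum f a b + f b.+1.
Proof.
move=> h; rewrite /ssum.
have -> : (b.+1 - a = (b - a).+1)%N by lia.
by rewrite /= ; have -> : (a + (b - a).+1 = b.+1)%N by lia.
Qed.

Lemma rmax_sum_last (g d : nat -> Z) a c : (a <= c)%N ->
  rmax (fun j => g j + ssum d j c.+1) a c.+1 =
  Z.max (rmax (fun j => g j + ssum d j c) a c) (g c.+1) + d c.+1.
Proof.
move=> h; rewrite rmax_last // ssum_single.
rewrite (@rmax_ext _ (fun j => (g j + ssum d j c) + d c.+1)) //.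
  by rewrite rmax_addc //; lia.
move=> i h1 h2; rewrite ssum_last //; lia.
Qed.

(* H x L e c : best value at level e, column c; base level L.
   Gf c k computes H at level L - k. *)
Fixpoint Gf (x : nat -> nat -> Z) (L : nat) (c k : nat) {struct c} : Z :=
  match k with
  | O => x L c.+1
  | k'.+1 => match c with
     | O => 0
     | c'.+1 => if (c' < k')%N then 0 else
          (if (k' < c')%N then Z.max (Gf x L c' k) (Gf x L c' k') else Gf x L c' k')
          + (x (L - k)%N c.+1 - x (L - k)%N c)
     end
  end.
Definition H x L e c := Gf x L c (L - e).

Lemma H_base x L c : H x L L c = x L c.+1.
Proof. by rewrite /H subnn; case: c. Qed.

Lemma H_min x L e : (e < L)%N ->
  H x L e (L - e)%N = H x L e.+1 (L - e)%N.-1 + (x e (L - e)%N.+1 - x e (L - e)%N).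
Proof.
move=> h; rewrite /H.
have -> : (L - e = (L - e.+1).+1)%N by lia.
rewrite /= ltnn /=.
have -> : (L - (L - e.+1).+1 = e)%N by lia.
done.
Qed.

Lemma H_rec x L e c : (e < L)%N -> (L - e < c)%N ->
  H x L e c = Z.max (H x L e c.-1) (H x L e.+1 c.-1) + (x e c.+1 - x e c).
Proof.
move=> h hc; rewrite /H.
have -> : (L - e = (L - e.+1).+1)%N by lia.
case: c hc => [|c] hc; first by lia.
rewrite /=.
have -> : (c < L - e.+1)%N = false by lia.
have -> : (L - e.+1 < c)%N by lia.
have -> : (L - (L - e.+1).+1 = e)%N by lia.
done.
Qed.

Lemma H_mono (x y : nat -> nat -> Z) L N :
  (forall c, (c + L < N)%N -> y L c.+1 <= x L c.+1) ->
  (forall e c, (e < L)%N -> (1 <= c)%N -> (c + e < N)%N ->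
      y e c.+1 - y e c <= x e c.+1 - x e c) ->
  forall e c, (e <= L)%N -> (L - e <= c)%N -> (c + e < N)%N -> H y L e c <= H x L e c.
Proof.
move=> hb hi e c; elim: c e => [|c IH] e he hc hN.
- have eL : e = L by lia. subst e; rewrite !H_base; apply: hb; lia.
- case: (eqVneq e L) => [eL0|neL]; first by subst e; rewrite !H_base; apply: hb; lia.
  have eL : (e < L)%N by lia.
  case: (eqVneq (L - e)%N c.+1) => [ec|nec].
  + rewrite -ec (H_min y) // (H_min x) // ec /=.
    have h1 := IH e.+1 ltac:(lia) ltac:(lia) ltac:(lia).
    have h2 := hi e c.+1 eL ltac:(lia) ltac:(lia). lia.
  + rewrite (H_rec y) //; last by lia.
    rewrite (H_rec x) //; last by lia.
    rewrite /=.
    have h1 := IH e.+1 ltac:(lia) ltac:(lia) ltac:(lia).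
    have h3 := IH e ltac:(lia) ltac:(lia) ltac:(lia).
    have h2 := hi e c.+1 eL ltac:(lia) ltac:(lia). lia.
Qed.

Lemma perj (Zg rho zeta xi delta : nat -> Z) (j B : nat) :
  rho j = Z.min (xi j) (zeta j) ->
  (forall c, (j <= c)%N -> (c < B)%N -> rho c.+1 = rho c + Z.min (xi c.+1) (zeta c.+1) - xi c) ->
  (forall c, (j <= c)%N -> (c < B)%N -> zeta c.+1 = Z.max (xi c) (zeta c) + delta c.+1) ->
  Zg j.+1 = xi j + delta j.+1 ->
  (forall c, (j < c)%N -> (c < B)%N -> Zg c.+1 = Z.max (Zg c) (xi c) + delta c.+1) ->
  forall c, (j < c)%N -> (c <= B)%N ->
    Z.max (Zg c) (rho c) + Z.max (xi c - zeta c) 0 = Z.max (Zg c) (xi c).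
Proof.
move=> h0 hr hz hg0 hg.
have INV : forall c, (j < c)%N -> (c <= B)%N ->
  [/\ Zg c <= zeta c, rho c <= xi c, rho c <= zeta c &
      (rho c < xi c -> Z.max (Zg c) (rho c) = zeta c)].
  move=> c0 hc0.
  pose P c := (c <= B)%N -> [/\ Zg c <= zeta c, rho c <= xi c, rho c <= zeta c &
      (rho c < xi c -> Z.max (Zg c) (rho c) = zeta c)].
  apply: (@rmax_ind P j.+1) c0 hc0; rewrite /P.
  - move=> hB.
    have e1 := hr j (leqnn j) ltac:(lia).
    have e2 := hz j (leqnn j) ltac:(lia).
    split; lia.
  - move=> c hc IH hB.
    have [i1 i2 i3 i4] := IH ltac:(lia).
    have e1 := hr c ltac:(lia) ltac:(lia).
    have e2 := hz c ltac:(lia) ltac:(lia).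
    have e3 := hg c ltac:(lia) ltac:(lia).
    split; lia.
move=> c hc hB; have [i1 i2 i3 i4] := INV c hc hB.
case: (Z.lt_ge_cases (rho c) (xi c)) => hh.
- have := i4 hh; lia.
- lia.
Qed.

Section Key.
Variables (x z : nat -> nat -> Z) (N L : nat).
Definition ucg (e i : nat) : Z := if e is e'.+1 then z e' i else x 0 i.+1.
Definition dlg (e i : nat) : Z := Z.min (x e i.+1) (ucg e i) - x e i.
Hypothesis tog : forall e c, (1 <= c)%N -> (c + e <= N.-1)%N ->
  z e c = (if c == 1%N then x e.+1 1 else Z.max (x e.+1 c) (z e c.-1)) + dlg e c.
Hypothesis hL : (1 <= L)%N.
Hypothesis hLN : (L <= N.-1)%N.

Definition Qf e c := rmax (fun j => H x L e.+1 j.-1 + ssum (dlg e) j c) (L - e)%N c.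

Definition INV e := forall c, (L - e <= c)%N -> (c + e <= N.-1)%N -> H z L.-1 e c.-1 = Qf e c.

Lemma INV_base : INV L.-1.
Proof.
move=> c hc hcN.
rewrite H_base prednK; last by lia.
have E : Qf L.-1 c = rmax (fun j => x L j + ssum (dlg L.-1) j c) 1 c.
  rewrite /Qf.
  have -> : (L - L.-1 = 1)%N by lia.
  apply: rmax_ext; last by lia.
  move=> i h1 h2; rewrite prednK; last by lia.
  by rewrite H_base prednK.
rewrite E.
have : (1 <= c)%N by lia.
move: hcN; clear E hc.
pose P c := (c + L.-1 <= N.-1)%N -> z L.-1 c = rmax (fun j => x L j + ssum (dlg L.-1) j c) 1 c.
move=> hcN h1; move: hcN; apply: (@rmax_ind P 1) h1; rewrite /P.
- move=> hN; rewrite rmax_single ssum_single tog //=.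
  by rewrite prednK.
- move=> c' hc' IH hN.
  rewrite rmax_sum_last // -IH; last by lia.
  rewrite tog //.
  have -> : (c'.+1 == 1%N) = false by apply/negbTE; lia.
  rewrite prednK //=; lia.
Qed.

Section Step.
Variable e : nat.
Hypothesis he : (e.+1 <= L.-1)%N.
Hypothesis IHe : INV e.+1.
Let j0 := (L - e.+1)%N.
Let U j' := H x L e.+2 j'.-1 - x e.+1 j'.
Let rho j' c := x e.+1 j' + ssum (dlg e.+1) j' c.
Let Zg j' c := rmax (fun j => x e.+1 j + ssum (dlg e) j c) j'.+1 c.

Lemma hj0 : (1 <= j0)%N.
Proof. rewrite /j0; lia. Qed.

Lemma R1 c : (j0 <= c)%N -> H x L e.+1 c = rmax U j0 c + x e.+1 c.+1.
Proof.
move=> h.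
pose P c := H x L e.+1 c = rmax U j0 c + x e.+1 c.+1.
apply: (@rmax_ind P j0) h; rewrite /P.
- rewrite rmax_single /U /j0 H_min; last by lia.
  lia.
- move=> c' hc IH; rewrite H_rec; [|lia|rewrite /j0 in hc; lia].
  rewrite /= IH rmax_last // /U /=. lia.
Qed.

Lemma R2 c : (j0 <= c)%N -> Qf e.+1 c = rmax (fun j' => U j' + rho j' c) j0 c.
Proof.
move=> h; rewrite /Qf -/j0; apply: rmax_ext => // i h1 h2.
rewrite /U /rho; lia.
Qed.

Lemma R3 c : (j0 < c)%N -> Qf e c = rmax (fun j' => U j' + Zg j' c) j0 c.-1.
Proof.
move=> h; rewrite /Qf.
have -> : (L - e = j0.+1)%N by rewrite /j0; lia.
rewrite (@rmax_ext _ (fun j => rmax U j0 j.-1 + (x e.+1 j + ssum (dlg e) j c))); last first.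
- lia.
- move=> i h1 h2; rewrite R1; last by lia.
  rewrite prednK; last by lia. lia.
have -> : c = c.-1.+1 by lia.
rewrite rmax_exch; last by lia.
by rewrite -pred_Sn.
Qed.

Lemma starstar c : (j0 < c)%N -> (c + e < N.-1)%N ->
  Z.max (Qf e c) (Qf e.+1 c) + Z.max (x e.+1 c.+1 - z e c) 0 =
  Z.max (Qf e c) (H x L e.+1 c).
Proof.
move=> hc hcN.
have hj0' := hj0.
have PJ : forall j', (j0 <= j')%N -> (j' < c)%N ->
  Z.max (Zg j' c) (rho j' c) + Z.max (x e.+1 c.+1 - z e c) 0 = Z.max (Zg j' c) (x e.+1 c.+1).
  move=> j' h1 h2.
  apply: (@perj (fun c => Zg j' c) (fun c => rho j' c) (z e) (fun c => x e.+1 c.+1) (dlg e) j' c) => //.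
  - by rewrite /rho ssum_single /dlg /ucg; lia.
  - move=> c' hc1 hc2; rewrite /rho ssum_last // /dlg /ucg; lia.
  - move=> c' hc1 hc2; rewrite tog; [|lia|lia].
    have -> : (c'.+1 == 1%N) = false by apply/negbTE; lia.
    by rewrite /= Z.max_comm.
  - by rewrite /Zg rmax_single ssum_single.
  - move=> c' hc1 hc2; rewrite /Zg rmax_sum_last //; lia.
have PC : rho c c + Z.max (x e.+1 c.+1 - z e c) 0 = x e.+1 c.+1.
  by rewrite /rho ssum_single /dlg /ucg; lia.
rewrite R2 /=; last by lia.
rewrite R3 //.
have ec : c = c.-1.+1 by lia.
rewrite [in rmax (fun j' => U j' + rho j' c) j0 c]ec rmax_last; last by lia.
rewrite -ec.
set D := Z.max (x e.+1 c.+1 - z e c) 0.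
set A := rmax (fun j' => U j' + Zg j' c) j0 c.-1.
set B := rmax (fun j' => U j' + rho j' c) j0 c.-1.
have E1 : Z.max A B + D = rmax (fun j' => Z.max (U j' + Zg j' c) (U j' + x e.+1 c.+1)) j0 c.-1.
  rewrite /A /B -rmax_maxf; last by lia.
  rewrite -rmax_addc; last by lia.
  apply: rmax_ext; last by lia.
  move=> i h1 h2; have := PJ i h1 ltac:(lia); lia.
rewrite rmax_maxf in E1; last by lia.
rewrite (rmax_addc U) in E1; last by lia.
rewrite R1; last by lia.
rewrite [in rmax U j0 c]ec rmax_last; last by lia.
rewrite -ec -/A.
move: E1 PC; lia.
Qed.

Lemma INV_step : INV e.
Proof.
move=> c hc hcN.
have hj0' := hj0.
pose P c := (c + e <= N.-1)%N -> H z L.-1 e c.-1 = Qf e c.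
suff : forall c, (L - e <= c)%N -> P c by move=> S; apply: S.
apply: rmax_ind; rewrite /P.
- move=> hN.
  have E1 : ((L - e).-1 = L.-1 - e)%N by lia.
  rewrite E1 H_min; last by lia.
  rewrite IHe; [|lia|lia].
  rewrite /Qf rmax_single ssum_single.
  have -> : (L.-1 - e).+1 = (L - e)%N by lia.
  have -> : (L.-1 - e = j0)%N by rewrite /j0; lia.
  rewrite (tog (c:=(L - e)%N)); [|lia|lia].
  have -> : ((L - e)%N == 1%N) = false by apply/negbTE; lia.
  rewrite /=.
  have -> : ((L - e).-1 = j0)%N by rewrite /j0; lia.
  have -> : (L - e.+1 = j0)%N by [].
  rewrite rmax_single ssum_single.
  have -> : ((L - e) = j0.+1)%N by rewrite /j0; lia.
  rewrite H_min; last by lia.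
  have -> : (L - e.+1 = j0)%N by [].
  rewrite /dlg /ucg /=. lia.
- move=> c' hc' IH hN.
  rewrite H_rec; [|lia|lia].
  rewrite /= IH; last by lia.
  rewrite IHe; [|lia|lia].
  rewrite /Qf rmax_sum_last //.
  have -> : (c'.+1).-1 = c' by [].
  rewrite -/(Qf e c').
  rewrite (tog (c:=c'.+1)); [|lia|lia].
  have -> : (c'.+1 == 1%N) = false by apply/negbTE; lia.
  rewrite /=.
  have SS := starstar (c:=c') ltac:(rewrite /j0; lia) ltac:(lia).
  move: SS; rewrite /Qf; lia.
Qed.

End Step.

Lemma INV_all e : (e <= L.-1)%N -> INV e.
Proof.
move=> he.
have : forall k, (k <= L.-1)%N -> INV (L.-1 - k)%N.
  elim=> [|k IH] hk; first by rewrite subn0; exact: INV_base.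
  have -> : (L.-1 - k.+1 = (L.-1 - k).-1)%N by lia.
  apply: INV_step; first by lia.
  have -> : ((L.-1 - k).-1.+1 = L.-1 - k)%N by lia.
  apply: IH; lia.
move=> /(_ (L.-1 - e)%N ltac:(lia)).
by have -> : (L.-1 - (L.-1 - e) = e)%N by lia.
Qed.

Lemma Q0 c : (L <= c)%N -> Qf 0 c = H x L 0 c.
Proof.
move=> h.
pose P c := Qf 0 c = H x L 0 c.
apply: (@rmax_ind P L) h; rewrite /P.
- rewrite /Qf subn0 rmax_single ssum_single.
  have E := H_min x (L:=L) (e:=0) hL.
  rewrite subn0 in E; rewrite E /dlg /ucg. lia.
- move=> c0 hc IH; rewrite /Qf rmax_sum_last; last by rewrite subn0.
  rewrite -/(Qf 0 c0) IH (@H_rec x L 0 c0.+1); [|lia|lia].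
  rewrite /= /dlg /ucg. lia.
Qed.

Lemma keyG : H z L.-1 0 (N.-1).-1 = H x L 0 N.-1.
Proof.
rewrite -Q0 //.
have := INV_all (e:=0) ltac:(lia) (c:=N.-1) ltac:(lia) ltac:(lia).
by [].
Qed.

End Key.
Set Implicit Arguments. Unset Strict Implicit. Unset Printing Implicit Defensive.

Lemma S_op_S n X : S_op n.+2 X = S_op n.+1 (omega n.+1 X).
Proof. by []. Qed.

Lemma S_diag n X : GT n X -> forall t, (1 <= t)%N -> (t <= n)%N ->
  Z.of_nat (S_op n X t t) = H (xz X) (n - t) 0 n.-1.
Proof.
elim: n X => [|n IH] X G t h1 h2; first by lia.
case: n IH G h2 => [|n] IH G h2.
- have -> : t = 1%N by lia.
  by rewrite H_base /xz /S_op /=.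
- case: (eqVneq t n.+2) => [et|ht].
  + subst t; rewrite subnn H_base /xz /S_op S_aux_row //= addn0 //.
  + have htn : (t <= n.+1)%N by lia.
    rewrite S_op_S.
    set Zt := omega n.+1 X.
    have GZ : GT n.+1 Zt.
      have := GT_restr (@omega_GT n.+2 n.+1 X ltac:(lia) G); by [].
    rewrite IH //.
    have K := @keyG (xz X) (xz Zt) n.+2 (n.+2 - t)%N.
    have -> : (n.+1 - t = (n.+2 - t).-1)%N by lia.
    have -> : (n.+1).-1 = (n.+2).-1.-1 by [].
    apply: K; last by lia.
    + move=> e c hc hce.
      have := @toggle_z n.+2 X G e c hc hce.
      by rewrite /dl /uc /dlg /ucg.
    + lia.
Qed.
Set Implicit Arguments. Unset Strict Implicit. Unset Printing Implicit Defensive.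
Close Scope Z_scope.

Lemma diag_mono n X d c c' : GT n X -> (1 <= c)%N -> (c <= c')%N -> (c' + d <= n)%N ->
  (X (c + d) c <= X (c' + d) c')%N.
Proof.
move=> G h1 h2 h3.
have -> : c' = (c + (c' - c))%N by lia.
have : (c + (c' - c) + d <= n)%N by lia.
elim: (c' - c)%N => [|k IH] hk; first by rewrite addn0.
have := IH ltac:(lia).
have := GT_ir G (i := (c + k + d)%N) (j := (c + k)%N) ltac:(lia) ltac:(lia) ltac:(lia).
have -> : ((c + k + d).+1 = c + k.+1 + d)%N by lia.
have -> : ((c + k).+1 = c + k.+1)%N by lia.
lia.
Qed.

Lemma transfer n X Y : GOGAm n X -> GT n Y ->
  (forall L c, (c + L < n)%N -> (xz Y L c.+1 <= xz X L c.+1)%Z) ->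
  (forall e c, (1 <= c)%N -> (c + e < n)%N ->
     (xz Y e c.+1 - xz Y e c <= xz X e c.+1 - xz X e c)%Z) ->
  GOGAm n Y.
Proof.
case=> GX [GS Hd] GY hb hi; split => //; split.
- by apply: S_aux_GT => //; lia.
- move=> j hj hjn.
  have e1 := S_diag GY hj hjn.
  have e2 := S_diag GX hj hjn.
  have h3 := Hd j hj hjn.
  have M : (H (xz Y) (n - j) 0 n.-1 <= H (xz X) (n - j) 0 n.-1)%Z.
    apply: (@H_mono (xz X) (xz Y) (n - j)%N n); try lia.
    + move=> c hc; apply: hb; lia.
    + move=> e c h1 h2 h4; apply: hi; lia.
  lia.
Qed.

Lemma part_i n X k : GOGAm n X -> (1 <= k)%N -> (k <= n)%N ->
  GOGAm n (fun i j => if [&& 1 <= j, j + k <= i & i <= n] then 1 else X i j).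
Proof.
move=> HX hk hkn; have GX := HX.1.
pose Y := fun i j => if [&& 1 <= j, j + k <= i & i <= n] then 1 else X i j.
change (GOGAm n Y); apply: (@transfer n X Y) => //; rewrite /Y.
- split.
  + move=> i j a b c; case: ifP => _ //; exact: GT_pos GX a b c.
  + move=> i j a b c.
    have p1 := GT_il GX a b c. have p2 := GT_ir GX a b c.
    have q1 := GT_pos GX (i:=i) (j:=j) a b ltac:(lia).
    have q2 := GT_pos GX (i:=i.+1) (j:=j) a ltac:(lia) ltac:(lia).
    have q3 := GT_pos GX (i:=i.+1) (j:=j.+1) ltac:(lia) ltac:(lia) ltac:(lia).
    do 3 (case: ifP => ?); split; lia.
- move=> L c h; rewrite /xz.
  have q := GT_pos GX (i:=(c.+1 + L)%N) (j:=c.+1) ltac:(lia) ltac:(lia) ltac:(lia).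
  case: ifP => ?; lia.
- move=> e c h1 h2; rewrite /xz.
  have p := GT_ir GX (i:=(c + e)%N) (j:=c) h1 ltac:(lia) ltac:(lia).
  move: p; have -> : ((c + e).+1 = c.+1 + e)%N by lia.
  move=> p.
  do 2 (case: ifP => ?); lia.
Qed.

Lemma part_ii n X m k : GOGAm n X -> (1 <= k)%N -> (k <= m)%N -> (m <= n)%N ->
  (forall i, m.+1 <= i -> i <= n -> forall l, l <= n - i -> X (i + l) (k + l) = X i k) ->
  GOGAm n (fun i j => if [&& m < i, i <= n & i + k == j + m] then X m k else X i j).
Proof.
move=> HX hk hkm hmn Hc; have GX := HX.1.
pose Y := fun i j => if [&& m < i, i <= n & i + k == j + m] then X m k else X i j.
have qm := GT_pos GX (i:=m) (j:=k) hk hkm hmn.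
change (GOGAm n Y); apply: (@transfer n X Y) => //; rewrite /Y.
- split.
  + move=> i j a b c; case: ifP => _ //; exact: GT_pos GX a b c.
  + move=> i j a b c.
    have p1 := GT_il GX a b c. have p2 := GT_ir GX a b c.
    have F1 : i.+1 + k = j + m -> m < i.+1 -> X m k <= X i j.
      move=> h1 h2.
      have D := diag_mono (d := (m - k)%N) (c := k) (c' := j) GX hk ltac:(lia) ltac:(lia).
      have E1 : (k + (m - k) = m)%N by lia.
      have E2 : (j + (m - k) = i.+1)%N by lia.
      rewrite E1 E2 in D; lia.
    have F2 : m < i -> i + k = j + m -> X i.+1 j <= X m k.
      move=> h1 h2.
      have E := Hc m.+1 (leqnn _) ltac:(lia) (j - k)%N ltac:(lia).
      have E1 : (m.+1 + (j - k) = i.+1)%N by lia.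
      have E2 : (k + (j - k) = j)%N by lia.
      rewrite E1 E2 in E; rewrite E.
      exact: GT_il GX hk hkm ltac:(lia).
    have F3 : i = m -> j = k -> X i j = X m k by move=> -> ->.
    do 3 (case: ifP => ?); split; lia.
- move=> L c h; rewrite /xz.
  have F : m < c.+1 + L -> c.+1 + L + k = c.+1 + m -> X m k <= X (c.+1 + L) c.+1.
    move=> h1 h2.
    have D := diag_mono (d := L) (c := k) (c' := c.+1) GX hk ltac:(lia) ltac:(lia).
    have E1 : (k + L = m)%N by lia.
    rewrite E1 in D; lia.
  case: ifP => ?; lia.
- move=> e c h1 h2; rewrite /xz.
  have p := GT_ir GX (i:=(c + e)%N) (j:=c) h1 ltac:(lia) ltac:(lia).
  move: p; have -> : ((c + e).+1 = c.+1 + e)%N by lia.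
  move=> p.
  have F : (c + e = m)%N -> c = k -> X (c + e) c = X m k by move=> -> ->.
  do 2 (case: ifP => ?); lia.
Qed.

Theorem mainTheorem8 (n : nat) (X : triangle) (HX : GOGAm n X) :
  (* (i) *)
  (forall k, 1 <= k -> k <= n ->
     GOGAm n (fun i j => if [&& 1 <= j, j + k <= i & i <= n] then 1 else X i j)) /\
  (* (ii) *)
  (forall m k, 1 <= k -> k <= m -> m <= n ->
     (forall i, m.+1 <= i -> i <= n ->
        forall l, l <= n - i -> X (i + l) (k + l) = X i k) ->
     GOGAm n (fun i j => if [&& m < i, i <= n & i + k == j + m] then X m k
                         else X i j)).
Proof.
split.
- move=> k hk hkn; exact: part_i.
- move=> m k hk hkm hmn hc; exact: part_ii.
Qed.
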